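(* For any connected graphs $G$ and $H$, $dim_s(G\square H)\ge dim_s(G)\,dim_s(H)$.
   Context: Graphs are finite, simple, undirected; for connected $G$, $d_G$ is the shortest-path distance and $I_G[u,v]$ is the set of vertices lying on some shortest $u$–$v$ path. A vertex $w$ strongly resolves vertices $u,v$ if $v\in I_G[u,w]$ or $u\in I_G[v,w]$. A strong resolving set of $G$ is a set $S\subseteq V(G)$ such that every pair of vertices is strongly resolved by some vertex of $S$; $dim_s(G)$ is the minimum cardinality of such a set. $G\square H$ denotes the Cartesian product: vertex set $V(G)\times V(H)$, $(a,b)\sim(c,d)$ iff ($a=c$ and $bd\in E(H)$) or ($b=d$ and $ac\in E(G)$). *)

(* Defs.v *)
From mathcomp Require Import all_boot.
Set Implicit Arguments. Unset Strict Implicit. Unset Printing Implicit Defensive.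

Definition simple_graph (T : finType) (e : rel T) : Prop :=
  symmetric e /\ irreflexive e.

Definition connected_graph (T : finType) (e : rel T) : Prop :=
  forall x y : T, connect e x y.

Fixpoint nball (T : finType) (e : rel T) (x : T) (n : nat) : {set T} :=
  match n with
  | 0 => [set x]
  | n'.+1 => nball e x n' :|: [set y | [exists z in nball e x n', e z y]]
  end.

(* Shortest path distance (correct for connected graphs: every distance
   is < #|T|). *)
Definition gdist (T : finType) (e : rel T) (x y : T) : nat :=
  find (fun n => y \in nball e x n) (iota 0 #|T|).

Definition in_interval (T : finType) (e : rel T) (u v w : T) : bool :=
  gdist e u w + gdist e w v == gdist e u v.

Definition strongly_resolves (T : finType) (e : rel T) (w u v : T) : bool :=
  in_interval e u w v || in_interval e v w u.

Definition strong_resolving_set (T : finType) (e : rel T) (S : {set T}) : bool :=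
  [forall u, forall v, (u != v) ==> [exists w in S, strongly_resolves e w u v]].

Definition sdim (T : finType) (e : rel T) : nat :=
  find (fun n => [exists S : {set T}, strong_resolving_set e S && (#|S| == n)])
       (iota 0 #|T|.+1).

Definition cart_prod (T1 T2 : finType) (e1 : rel T1) (e2 : rel T2) : rel (T1 * T2) :=
  fun p q => ((p.1 == q.1) && e2 p.2 q.2) || ((p.2 == q.2) && e1 p.1 q.1).

(* Main.v *)
Require Import Defs.
From mathcomp Require Import all_boot.
From mathcomp Require Import zify.
Set Implicit Arguments. Unset Strict Implicit. Unset Printing Implicit Defensive.

Section Dist.
Variables (T : finType) (e : rel T).
Hypothesis esym : symmetric e.
Hypothesis conn : connected_graph e.

Local Notation D := (gdist e).

Lemma nballS x n y :
  (y \in nball e x n.+1) = (y \in nball e x n) || [exists z in nball e x n, e z y].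
Proof. by rewrite /= inE inE. Qed.

Lemma nball_mono x m n : m <= n -> {subset nball e x m <= nball e x n}.
Proof.
elim: n => [|n IH]; first by rewrite leqn0 => /eqP ->.
rewrite leq_eqVlt => /orP [/eqP -> //|Hm] y Hy.
by rewrite nballS (IH Hm y Hy).
Qed.

Lemma path_nball x p : path e x p -> last x p \in nball e x (size p).
Proof.
elim/last_ind: p => [|p z IH]; first by rewrite /= inE.
rewrite rcons_path => /andP [Hp He].
rewrite last_rcons size_rcons nballS; apply/orP; right.
by apply/existsP; exists (last x p); rewrite IH.
Qed.

Lemma nball_ex x y : exists2 n, n < #|T| & y \in nball e x n.
Proof.
have /connectP [p Hp Hy] := conn x y.
rewrite Hy; case: (shortenP Hp) => p' Hp' Hu Hsub.
exists (size p'); last exact: path_nball.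
have := card_uniqP Hu; rewrite /= => Hc.
have := max_card (mem (x :: p')); rewrite Hc /=; lia.
Qed.

Lemma gdist_spec x y : D x y < #|T| /\ y \in nball e x (D x y).
Proof.
have [n Hn Hy] := nball_ex x y.
have Hh : has (fun n => y \in nball e x n) (iota 0 #|T|).
  by apply/hasP; exists n => //; rewrite mem_iota.
have Hlt : D x y < #|T| by rewrite /gdist; move: Hh; rewrite has_find size_iota.
split => //.
have H := nth_find 0 Hh.
rewrite nth_iota in H; last exact: Hlt.
by rewrite add0n in H.
Qed.

Lemma gdist_min x y n : y \in nball e x n -> D x y <= n.
Proof.
move=> Hy; have [Hlt _] := gdist_spec x y.
case: (ltnP n #|T|) => Hn; last by apply: ltnW; apply: leq_trans Hlt Hn.
rewrite leqNgt; apply/negP => Hlt2.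
have := before_find 0 Hlt2; rewrite nth_iota; last exact: ltn_trans Hlt2 Hlt.
by rewrite add0n Hy.
Qed.

Lemma nballP x y n : (y \in nball e x n) = (D x y <= n).
Proof.
apply/idP/idP; first exact: gdist_min.
by move=> H; apply: (nball_mono H); case: (gdist_spec x y).
Qed.
Lemma gdist0 x : D x x = 0.
Proof. by apply/eqP; rewrite -leqn0 -nballP /= inE. Qed.

Lemma gdist0_eq x y : D x y = 0 -> x = y.
Proof. by move=> H; have := leqnn 0; rewrite -{1}H -nballP /= inE => /eqP. Qed.

Lemma gdist_edge x y z : e y z -> D x z <= (D x y).+1.
Proof.
move=> He; rewrite -nballP nballS; apply/orP; right.
by apply/existsP; exists y; rewrite nballP leqnn.
Qed.

Lemma gdist_adj x y : e x y -> D x y <= 1.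
Proof. by move=> He; have := gdist_edge x He; rewrite gdist0. Qed.
Lemma gdist_last x z n : D x z = n.+1 -> exists2 y, D x y = n & e y z.
Proof.
move=> Hz; have := leqnn n.+1; rewrite -{1}Hz -nballP nballS => /orP [].
  by rewrite nballP Hz ltnn.
move=> /existsP [y /andP [Hy He]]; exists y => //.
rewrite nballP in Hy; have := gdist_edge x He.
rewrite Hz; lia.
Qed.
Lemma gdist_tri x y z : D x z <= D x y + D y z.
Proof.
suff H : forall m z, D y z <= m -> D x z <= D x y + m by exact: H.
elim => [|m IH] z'.
  by rewrite leqn0 => /eqP /gdist0_eq <-; rewrite addn0.
rewrite -nballP nballS => /orP [].
  by rewrite nballP => /IH; lia.
move=> /existsP [w /andP [Hw He]]; rewrite nballP in Hw.
have := IH _ Hw; have := gdist_edge x He; lia.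
Qed.

Lemma gdist_sym x y : D x y = D y x.
Proof.
suff H : forall m x y, D x y <= m -> D y x <= m.
  by apply/eqP; rewrite eqn_leq; apply/andP; split; apply: H.
elim => [|m IH] a b.
  by rewrite leqn0 => /eqP /gdist0_eq ->; rewrite gdist0.
rewrite -nballP nballS => /orP [].
  by rewrite nballP => /IH; lia.
move=> /existsP [w /andP [Hw He]]; rewrite nballP in Hw.
have H1 := IH _ _ Hw.
have H2 : D b w <= 1 by apply: gdist_adj; rewrite esym.
have := gdist_tri b w a; lia.
Qed.

Lemma gdist_first y w : y != w -> exists2 z, e y z & (D z w).+1 = D y w.
Proof.
move=> Hne; case Hd: (D w y) => [|k].
  by move/gdist0_eq: Hd => Hwy; rewrite Hwy eqxx in Hne.
have [z Hz He] := gdist_last Hd.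
by exists z; [rewrite esym | rewrite gdist_sym Hz gdist_sym Hd].
Qed.

Lemma gdist_lip (f : T -> nat) x :
  f x = 0 -> (forall a b, e a b -> f b <= (f a).+1) -> forall y, f y <= D x y.
Proof.
move=> H0 Hl y.
suff H : forall n y, y \in nball e x n -> f y <= n.
  by apply: H; rewrite nballP.
elim => [|n IH] z; first by rewrite /= inE => /eqP ->; rewrite H0.
rewrite nballS => /orP [Hz|].
  by have := IH _ Hz; lia.
by move=> /existsP [w /andP [Hw He]]; have := IH _ Hw; have := Hl _ _ He; lia.
Qed.
End Dist.

Definition mdist (T : finType) (e : rel T) (u v : T) : bool :=
  [forall z, e v z ==> (gdist e u z <= gdist e u v)].
Definition mmd (T : finType) (e : rel T) (u v : T) : bool :=
  mdist e u v && mdist e v u.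
Definition mcov (T : finType) (e : rel T) (X : {set T}) : bool :=
  [forall u, forall v, (mmd e u v && (u != v)) ==> (u \in X) || (v \in X)].

Section Res.
Variables (T : finType) (e : rel T).
Hypothesis esym : symmetric e.
Hypothesis conn : connected_graph e.
Local Notation D := (gdist e).

Lemma geo_max u v w : mdist e u v -> D u v + D v w = D u w -> w = v.
Proof.
move=> /forallP Hm Hd; apply/eqP; case: (eqVneq w v) => // Hne.
rewrite eq_sym in Hne.
have [z Hz Hzw] := gdist_first esym conn Hne.
have := implyP (Hm z) Hz; have := gdist_tri conn u z w; lia.
Qed.

Lemma resolving_cover S : strong_resolving_set e S -> mcov e S.
Proof.
move=> HS; apply/forallP => u; apply/forallP => v.
apply/implyP => /andP [/andP [H1 H2] Hne].
move/forallP: HS => /(_ u) /forallP /(_ v) /implyP /(_ Hne) /existsP [w /andP [Hw Hr]].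
case/orP: Hr => /eqP Hr.
  by rewrite (geo_max H1 Hr) in Hw; rewrite Hw orbT.
by rewrite (geo_max H2 Hr) in Hw; rewrite Hw.
Qed.

Lemma argmax_mdist a b x :
  D a b + D b x = D a x ->
  (forall y, D a b + D b y == D a y -> D a y <= D a x) -> mdist e a x.
Proof.
move=> Hx Hmax; apply/forallP => z; apply/implyP => He.
rewrite leqNgt; apply/negP => Hlt.
have E1 := gdist_edge conn a He.
have E2 := gdist_edge conn b He.
have E3 := gdist_tri conn a b z.
have : D a b + D b z == D a z by apply/eqP; lia.
move/Hmax; lia.
Qed.

Lemma cover_resolving X : mcov e X -> strong_resolving_set e X.
Proof.
move=> HX; apply/forallP => u; apply/forallP => v; apply/implyP => Hne.
have Pv : D u v + D v v == D u v by rewrite gdist0 // addn0.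
case: (@arg_maxnP _ v (fun x => D u v + D v x == D u x) (fun x => D u x) Pv) => x /eqP Hx Hxmax.
have Pu : D x u + D u u == D x u by rewrite gdist0 // addn0.
case: (@arg_maxnP _ u (fun y => D x u + D u y == D x y) (fun y => D x y) Pu) => y /eqP Hy Hymax.
have Mux : mdist e u x by apply: (argmax_mdist Hx) => z /Hxmax.
have Mxy : mdist e x y by apply: (argmax_mdist Hy) => z /Hymax.
have Myx : mdist e y x.
  apply/forallP => z; apply/implyP => He.
  have := implyP (forallP Mux z) He.
  have := gdist_tri conn y u z.
  have := gdist_sym esym conn x y; have := gdist_sym esym conn x u;
  have := gdist_sym esym conn u y; lia.
have Hxy : x != y.
  apply/negP => /eqP Exy; move: Hy Hx; rewrite Exy gdist0 // => Hy Hx.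
  have Hyu : D y u = 0 by lia.
  move/(gdist0_eq conn): Hyu => Eyu; move: Hx; rewrite Eyu gdist0 // => Hx.
  have Huv : D u v = 0 by lia.
  by move/(gdist0_eq conn): Huv => Euv; rewrite Euv eqxx in Hne.
have := forallP (forallP HX x) y; rewrite /mmd Mxy Myx Hxy /= => /orP [Hx'|Hy'].
  by apply/existsP; exists x; rewrite Hx' /strongly_resolves /in_interval Hx eqxx.
apply/existsP; exists y; rewrite Hy' /strongly_resolves /in_interval; apply/orP; right.
have := gdist_tri conn v u y; have := gdist_tri conn x v y; have := gdist_tri conn y v x.
have := gdist_sym esym conn x y; have := gdist_sym esym conn x u;
have := gdist_sym esym conn u y; have := gdist_sym esym conn v x;
have := gdist_sym esym conn v y; have := gdist_sym esym conn u v.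
move=> *; apply/eqP; lia.
Qed.

Lemma setT_resolving : strong_resolving_set e setT.
Proof.
apply/forallP => u; apply/forallP => v; apply/implyP => _.
by apply/existsP; exists v; rewrite inE /strongly_resolves /in_interval gdist0 // addn0 eqxx.
Qed.

Lemma sdim_le X : strong_resolving_set e X -> sdim e <= #|X|.
Proof.
move=> HX; rewrite leqNgt; apply/negP => Hlt.
have Hs : #|X| < #|T|.+1 by rewrite ltnS max_card.
have := before_find 0 Hlt; rewrite nth_iota; last exact: Hs.
rewrite add0n /= => Hf.
have Ht : [exists S : {set T}, strong_resolving_set e S && (#|S| == #|X|)] by apply/existsP; exists X; rewrite HX eqxx.
by rewrite Ht in Hf.
Qed.

Lemma sdim_ex : exists2 S, strong_resolving_set e S & #|S| = sdim e.
Proof.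
set P := fun n => [exists S : {set T}, strong_resolving_set e S && (#|S| == n)].
have Hh : has P (iota 0 #|T|.+1).
  apply/hasP; exists #|T|; first by rewrite mem_iota leq0n add0n ltnS leqnn.
  by rewrite /P /=; apply/existsP; exists setT; rewrite setT_resolving cardsT eqxx.
have Hlt : sdim e < #|T|.+1 by rewrite /sdim; move: Hh; rewrite has_find size_iota.
have := nth_find 0 Hh; rewrite nth_iota; last exact: Hlt.
by rewrite add0n => /existsP [S /andP [H1 /eqP H2]]; exists S.
Qed.
End Res.

Lemma nball_connect (T : finType) (e : rel T) x n y : y \in nball e x n -> connect e x y.
Proof.
elim: n y => [|n IH] y; first by rewrite /= inE => /eqP ->; exact: connect0.
rewrite nballS => /orP [/IH //|/existsP [z /andP [Hz He]]].
by apply: connect_trans (IH _ Hz) (connect1 He).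
Qed.

Section Prod.
Variables (T1 T2 : finType) (e1 : rel T1) (e2 : rel T2).
Hypotheses (s1 : symmetric e1) (s2 : symmetric e2).
Hypotheses (c1 : connected_graph e1) (c2 : connected_graph e2).
Local Notation E := (cart_prod e1 e2).

Lemma prod_sym : symmetric E.
Proof.
move=> [a b] [c d]; rewrite /cart_prod /= (s1 a c) (s2 b d).
by rewrite (eq_sym a c) (eq_sym b d).
Qed.

Lemma lift1 g h n a : a \in nball e1 g n -> (a, h) \in nball E (g, h) n.
Proof.
elim: n a => [|n IH] a; first by rewrite /= !inE => /eqP ->.
rewrite !nballS => /orP [/IH ->//|/existsP [z /andP [Hz He]]].
apply/orP; right; apply/existsP; exists (z, h).
by rewrite IH //= /cart_prod /= eqxx He orbT.
Qed.

Lemma lift2 g h n a : a \in nball e2 h n -> (g, a) \in nball E (g, h) n.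
Proof.
elim: n a => [|n IH] a; first by rewrite /= !inE => /eqP ->.
rewrite !nballS => /orP [/IH ->//|/existsP [z /andP [Hz He]]].
apply/orP; right; apply/existsP; exists (g, z).
by rewrite IH //= /cart_prod /= eqxx He.
Qed.

Lemma prod_conn : connected_graph E.
Proof.
move=> [g h] [g' h'].
have [_ H1] := gdist_spec c1 g g'.
have [_ H2] := gdist_spec c2 h h'.
apply: connect_trans (nball_connect (lift1 h H1)) _.
exact: nball_connect (lift2 g' H2).
Qed.

Lemma prod_dist g h g' h' :
  gdist E (g, h) (g', h') = gdist e1 g g' + gdist e2 h h'.
Proof.
apply/eqP; rewrite eqn_leq; apply/andP; split.
  have [_ H1] := gdist_spec c1 g g'.
  have [_ H2] := gdist_spec c2 h h'.
  have A1 := gdist_min prod_conn (lift1 h H1).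
  have A2 := gdist_min prod_conn (lift2 g' H2).
  have := gdist_tri prod_conn (g, h) (g', h) (g', h'); lia.
pose f := fun y : T1 * T2 => gdist e1 g y.1 + gdist e2 h y.2.
have := @gdist_lip _ E prod_conn f (g, h); rewrite /f /=; apply.
  by rewrite !gdist0.
move=> [a1 a2] [b1 b2]; rewrite /cart_prod /= => /orP [] /andP [/eqP <- He].
  have := gdist_edge c2 h He; lia.
have := gdist_edge c1 g He; lia.
Qed.

Lemma prod_mdist g h g' h' :
  mdist e1 g g' -> mdist e2 h h' -> mdist E (g, h) (g', h').
Proof.
move=> /forallP M1 /forallP M2; apply/forallP => [[z1 z2]]; apply/implyP.
rewrite /cart_prod /= !prod_dist => /orP [] /andP [/eqP <- He].
  by have := implyP (M2 z2) He; lia.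
by have := implyP (M1 z1) He; lia.
Qed.

Lemma prod_mmd g h g' h' :
  mmd e1 g g' -> mmd e2 h h' -> mmd E (g, h) (g', h').
Proof.
by move=> /andP [A B] /andP [C D]; rewrite /mmd !prod_mdist.
Qed.
End Prod.

Definition cov (T : finType) (M : rel T) (X : {set T}) : bool :=
  [forall u, forall v, (M u v && (u != v)) ==> (u \in X) || (v \in X)].

Lemma card_sumb (T : finType) (A : pred T) : #|A| = \sum_i (i \in A : nat).
Proof.
rewrite -sum1_card big_mkcond /=; apply: eq_bigr => i _; by case: (i \in A).
Qed.

Section Comb.
Variables (T1 T2 : finType) (M1 : rel T1) (M2 : rel T2) (S : {set T1 * T2}) (b1 b2 : nat).
Hypothesis M1sym : symmetric M1.
Hypothesis H1 : forall X : {set T1}, cov M1 X -> b1 <= #|X|.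
Hypothesis H2 : forall Y : {set T2}, cov M2 Y -> b2 <= #|Y|.
Hypothesis HS : forall g g' h h', M1 g g' -> M2 h h' -> h != h' ->
  ((g, h) \in S) || ((g', h') \in S).

Definition Kp (p : T1) : {set T2} :=
  [set h | ((p, h) \in S) || [forall q, (M1 p q && (p != q)) ==> ((q, h) \in S)]].

Lemma Kp_cov p : cov M2 (Kp p).
Proof.
apply/forallP => h; apply/forallP => h'; apply/implyP => /andP [HM Hne].
rewrite !inE; apply/negPn/negP; rewrite negb_or !negb_or => /andP [/andP [A B] /andP [C _]].
move/forallPn: B => [q]; rewrite negb_imply => /andP [/andP [Mpq Hpq] Hq].
have Mqp : M1 q p by rewrite M1sym.
have := HS Mqp HM Hne; by rewrite (negbTE Hq) (negbTE C).
Qed.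

Lemma per_h (P : {set T1}) h : cov M1 P ->
  (forall X : {set T1}, cov M1 X -> #|P| <= #|X|) ->
  #|[pred p | (p \in P) && (h \in Kp p)]| <= #|[pred g | (g, h) \in S]|.
Proof.
move=> HP Pmin.
set Y := [set g | (g, h) \in S].
set X0 := [set p in P | (p \notin Y) && [forall q, (M1 p q && (p != q)) ==> (q \in Y)]].
have Hsub : [pred p | (p \in P) && (h \in Kp p)] \subset (P :&: Y) :|: X0.
  apply/subsetP => p; rewrite !inE => /andP [Pp /orP [Hs|Hf]].
    by rewrite Pp Hs.
  case Hs: ((p, h) \in S); first by rewrite Pp.
  rewrite Pp /=; apply/forallP => q; apply/implyP => Hq.
  by rewrite inE (implyP (forallP Hf q) Hq).
have Ha := subset_leq_card Hsub.
have Hb := (leq_card_setU (P :&: Y) X0).1.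
have X0P : X0 \subset P by apply/subsetP => p; rewrite inE => /andP [].
have HX0 : forall u v, u \in X0 -> M1 u v -> u != v -> v \in Y.
  move=> u v; rewrite inE => /andP [_ /andP [_ /forallP F]] Muv Huv.
  by apply: (implyP (F v)); rewrite Muv Huv.
have HX0Y : forall u, u \in X0 -> u \notin Y.
  by move=> u; rewrite inE => /andP [_ /andP []].
set P' := (P :\: X0) :|: (Y :\: P).
have HP' : cov M1 P'.
  apply/forallP => u; apply/forallP => v; apply/implyP => /andP [Muv Huv].
  have := implyP (forallP (forallP HP u) v); rewrite Muv Huv => /(_ isT).
  rewrite !in_setU !in_setD.
  case Pu: (u \in P); case Pv: (v \in P) => //= _; rewrite ?andbT ?andbF ?orbF /=.
  - case Xu: (u \in X0); case Xv: (v \in X0) => //=; rewrite ?orbT ?orbF //.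
    by have := HX0 _ _ Xu Muv Huv; rewrite (negbTE (HX0Y _ Xv)).
  - case Xu: (u \in X0) => //=; rewrite ?orbT ?orbF //.
    by rewrite (HX0 _ _ Xu Muv Huv).
  - case Xv: (v \in X0) => //=; rewrite ?orbT ?orbF //.
    have Hvu : v != u by rewrite eq_sym.
    have Mvu : M1 v u by rewrite M1sym.
    by rewrite (HX0 _ _ Xv Mvu Hvu).
have Hc := Pmin _ HP'; rewrite /P' in Hc.
have Hd := (leq_card_setU (P :\: X0) (Y :\: P)).1.
have He := cardsID X0 P.
have Hf : P :&: X0 = X0 by apply/setIidPr.
rewrite Hf in He.
have Hg := cardsID P Y.
have Hh : Y :&: P = P :&: Y by rewrite setIC.
rewrite Hh in Hg.
have Hi : #|[pred g | (g, h) \in S]| = #|Y|.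
  by apply: eq_card => g; rewrite /Y in_set.
rewrite Hi; apply: leq_trans Ha _; apply: leq_trans Hb _.
rewrite -Hg leq_add2l; have := leq_trans Hc Hd; rewrite -He.
by rewrite addnC leq_add2l.
Qed.

Lemma comb : b1 * b2 <= #|S|.
Proof.
have HT : cov M1 setT by apply/forallP => u; apply/forallP => v; rewrite in_setT implybT.
case: (@arg_minnP _ setT (fun X => cov M1 X) (fun X => #|X|) HT) => P HP Pmin.
have Hb1 := H1 HP.
have E1 : b1 * b2 <= \sum_(p in P) #|Kp p|.
  apply: leq_trans (leq_mul Hb1 (leqnn b2)) _.
  rewrite -sum_nat_const; apply: leq_sum => p _; exact: H2 (Kp_cov p).
apply: leq_trans E1 _.
have E2 : \sum_(p in P) #|Kp p| = \sum_h #|[pred p | (p \in P) && (h \in Kp p)]|.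
  under eq_bigr do rewrite card_sumb.
  rewrite exchange_big /=; apply: eq_bigr => h _.
  rewrite card_sumb big_mkcond /=; apply: eq_bigr => p _.
  by case Pp: (p \in P); rewrite [p \in [pred _ in _ | _]]unfold_in /= Pp.
have E3 : #|S| = \sum_h #|[pred g | (g, h) \in S]|.
  rewrite card_sumb.
  have -> : \sum_(x : T1 * T2) (x \in S : nat) = \sum_g \sum_h ((g, h) \in S : nat).
    by rewrite pair_big /=; apply: eq_bigr => [[g h]].
  rewrite exchange_big /=; apply: eq_bigr => h _.
  by rewrite card_sumb.
rewrite E2 E3; apply: leq_sum => h _; apply: per_h => // X HX; exact: Pmin.
Qed.
End Comb.

Theorem theorem26 (T1 T2 : finType) (e1 : rel T1) (e2 : rel T2) :
  simple_graph e1 -> simple_graph e2 ->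
  connected_graph e1 -> connected_graph e2 ->
  sdim (cart_prod e1 e2) >= sdim e1 * sdim e2.
Proof.
move=> [s1 _] [s2 _] c1 c2.
have sE := prod_sym s1 s2.
have cE := prod_conn c1 c2.
have [S HS HcS] := sdim_ex cE.
rewrite -HcS.
apply: (@comb _ _ (mmd e1) (mmd e2)).
- by move=> u v; rewrite /mmd andbC.
- by move=> X HX; apply: sdim_le; apply: (cover_resolving s1 c1).
- by move=> Y HY; apply: sdim_le; apply: (cover_resolving s2 c2).
move=> g g' h h' M1 M2 Hne.
have HC := resolving_cover sE cE HS.
have := implyP (forallP (forallP HC (g, h)) (g', h')); apply.
rewrite (prod_mmd c1 c2 M1 M2) /=.
by apply/negP => /eqP [_ Eh]; rewrite Eh eqxx in Hne.
Qed.
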